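(* Let $(n,w)$ be a $\{0,1\}$-instance of TSP with $n\ge1$ and $w(K_n)=d\binom n2$ for some $d\in[0,1]$ satisfying $n^{-1}\le d\le 1-4n^{-1}$. Then there exists an optimal matching $M^*$ of $K_n$ with $w(M^* )\le f(n,d)$, where $$f(n,d)=\begin{cases}\tfrac12 dn-\tfrac18 dn+1 & \text{if } d\le \tfrac{9}{25},\\ \tfrac12 dn-\tfrac18(1-d)^2n+1 & \text{if } d\ge\tfrac{9}{25}.\end{cases}$$
   Context: $K_n=(V_n,E_n)$ is the complete graph on $n$ vertices; a $\{0,1\}$-instance is a weighting $w:E_n\to\{0,1\}$; $w(G)=\sum_{e\in E(G)}w(e)$. An optimal matching of $K_n$ is any set of $\lfloor n/2\rfloor$ pairwise disjoint edges of $K_n$. *)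

(* Defs.v *)
From HB Require Import structures.
From mathcomp Require Import all_boot all_order all_algebra.
Set Implicit Arguments. Unset Strict Implicit. Unset Printing Implicit Defensive.
Import Order.TTheory GRing.Theory Num.Theory.

Definition Kn_edges (n : nat) : {set {set 'I_n}} := [set e : {set 'I_n} | #|e| == 2%N].

Definition zero_one_instance (n : nat) (w : {set 'I_n} -> nat) : Prop :=
  forall e : {set 'I_n}, e \in Kn_edges n -> (w e <= 1)%N.

Definition weight (n : nat) (w : {set 'I_n} -> nat) (F : {set {set 'I_n}}) : nat :=
  \sum_(e in F) w e.

Definition optimal_matching (n : nat) (M : {set {set 'I_n}}) : Prop :=
  [/\ M \subset Kn_edges n, trivIset M & #|M| = n./2].

Local Open Scope ring_scope.

Definition f_low (R : realFieldType) (n : nat) (d : R) : R :=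
  2^-1 * d * n%:R - 8^-1 * d * n%:R + 1.
Definition f_high (R : realFieldType) (n : nat) (d : R) : R :=
  2^-1 * d * n%:R - 8^-1 * (1 - d) ^+ 2 * n%:R + 1.

(* Main.v *)
Require Import Defs.
From HB Require Import structures.
From mathcomp Require Import all_boot all_order all_algebra.
From mathcomp Require Import zify ring lra.
Import Order.TTheory GRing.Theory Num.Theory.
Set Implicit Arguments. Unset Strict Implicit. Unset Printing Implicit Defensive.

Section Gen.
Variable T : finType.

Lemma disj2 (a b : T) (C : {set T}) :
  [disjoint [set a; b] & C] = (a \notin C) && (b \notin C).
Proof.
apply/idP/idP.
  move=> h; apply/andP; split; apply/negP => hC;
  by move: (disjointFl h hC); rewrite !inE eqxx ?orbT.
case/andP=> ha hb; rewrite -setI_eq0; apply/eqP/setP => x; rewrite !inE.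
by case: (x =P a) => [->|_]; [rewrite (negbTE ha) | case: (x =P b) => [->|_]; rewrite ?(negbTE hb) ?andbF].
Qed.

Lemma disj_neq (A B : {set T}) : [disjoint A & B] -> A != set0 -> A != B.
Proof.
move=> h /set0Pn[x hx]; apply/eqP => eAB; subst B.
by move: (disjointFr h hx); rewrite hx.
Qed.

Lemma triv1 (B : {set T}) : trivIset [set B].
Proof.
apply/trivIsetP => A C; rewrite !inE => /eqP -> /eqP ->; by rewrite eqxx.
Qed.

Lemma triv2 (B1 B2 : {set T}) : [disjoint B1 & B2] -> trivIset [set B1; B2].
Proof.
move=> h12; apply/trivIsetP => A C hA hC.
move: hA hC; rewrite !inE.
by case/orP=> /eqP -> ; case/orP=> /eqP ->; rewrite ?eqxx // => _; rewrite // disjoint_sym.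
Qed.

Lemma triv3 (B1 B2 B3 : {set T}) : [disjoint B1 & B2] -> [disjoint B1 & B3] ->
  [disjoint B2 & B3] -> trivIset [set B1; B2; B3].
Proof.
move=> h12 h13 h23; apply/trivIsetP => A C hA hC.
move: hA hC; rewrite !inE -!orbA.
by case/orP=> [/eqP ->|/orP[]/eqP ->]; case/orP=> [/eqP ->|/orP[]/eqP ->]; rewrite ?eqxx // => _; rewrite // disjoint_sym.
Qed.

Lemma card3 (B1 B2 B3 : {set T}) : [disjoint B1 & B2] -> [disjoint B1 & B3] ->
  [disjoint B2 & B3] -> B1 != set0 -> B2 != set0 -> #|[set B1; B2; B3]| = 3.
Proof.
move=> h12 h13 h23 n1 n2.
rewrite [[set B1; B2; B3]]setUC cardsU1 cards2 !inE.
rewrite (disj_neq h12 n1) eq_sym (negbTE (disj_neq h13 n1)) eq_sym (negbTE (disj_neq h23 n2)).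
by [].
Qed.

Lemma card2' (B1 B2 : {set T}) : [disjoint B1 & B2] -> B1 != set0 -> #|[set B1; B2]| = 2.
Proof. by move=> h n1; rewrite cards2 (disj_neq h n1). Qed.

Lemma sum_card (A : {set T}) (b : pred T) :
  \sum_(y in A) (b y : nat) = #|[set y in A | b y]|.
Proof.
rewrite -sum1_card [LHS]big_mkcond [RHS]big_mkcond /=.
by apply: eq_bigr => y _; rewrite inE; case: (y \in A); case: (b y).
Qed.


Lemma sum3_le (A B C : {set T}) (f : T -> nat) :
  [disjoint A & B] -> [disjoint A & C] -> [disjoint B & C] ->
  \sum_(i in A) f i + \sum_(i in B) f i + \sum_(i in C) f i <= \sum_i f i.
Proof.
move=> dAB dAC dBC.
rewrite [\sum_(i in A) _]big_mkcond [\sum_(i in B) _]big_mkcond [\sum_(i in C) _]big_mkcond.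
rewrite -!big_split /=; apply: leq_sum => i _.
case: (boolP (i \in A)) => iA.
  by rewrite (disjointFr dAB iA) (disjointFr dAC iA) !addn0.
case: (boolP (i \in B)) => iB.
  by rewrite (disjointFr dBC iB) addn0.
by case: (i \in C).
Qed.

Lemma card_le_sum (A B : {set T}) (b : pred T) :
  B \subset A -> (forall y, y \in B -> b y) -> #|B| <= \sum_(y in A) (b y : nat).
Proof.
move=> sBA hB; rewrite sum_card; apply: subset_leq_card.
apply/subsetP => y yB; rewrite inE (subsetP sBA y yB); exact: hB.
Qed.

Lemma disjP' (A B : {set T}) : (forall x, x \in A -> x \in B -> False) -> [disjoint A & B].
Proof.
move=> h; rewrite -setI_eq0; apply/eqP/setP => x; rewrite !inE.
apply/negbTE/negP => /andP[hA hB]; exact: (h x hA hB).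
Qed.
End Gen.

Section Match.
Variable n : nat.
Variable w : {set 'I_n} -> nat.

Definition hh (x y : 'I_n) : bool := (x != y) && (w [set x; y] == 0%N).
Definition gg (x y : 'I_n) : bool := (x != y) && (w [set x; y] != 0%N).
Definition hedge (e : {set 'I_n}) : bool := (#|e| == 2) && (w e == 0%N).
Definition hmatch (M : {set {set 'I_n}}) : bool :=
  [forall e in M, hedge e] && trivIset M.

Lemma hh_sym x y : hh x y = hh y x.
Proof. by rewrite /hh eq_sym setUC. Qed.
Lemma gg_sym x y : gg x y = gg y x.
Proof. by rewrite /gg eq_sym setUC. Qed.

Lemma hh_hedge x y : hh x y -> hedge [set x; y].
Proof. by case/andP=> ne h0; rewrite /hedge cards2 ne h0. Qed.

Lemma hedge_n0 e : hedge e -> e != set0.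
Proof. by case/andP=> /eqP c _; apply/eqP => e0; rewrite e0 cards0 in c. Qed.

Section Max.
Variable M : {set {set 'I_n}}.
Hypothesis hM : hmatch M.
Hypothesis maxM : forall M', hmatch M' -> #|M'| <= #|M|.

Lemma hM_edge e : e \in M -> hedge e.
Proof. by case/andP: hM => /forall_inP h _; apply: h. Qed.
Lemma hM_triv : trivIset M.
Proof. by case/andP: hM. Qed.

Lemma aug (D P : {set {set 'I_n}}) : D \subset M -> {in P, forall B, hedge B} ->
  trivIset P -> (forall B C, B \in P -> C \in M -> C \notin D -> [disjoint B & C]) ->
  #|D| < #|P| -> False.
Proof.
move=> sDM hP tP hdis ltDP.
set M' := (M :\: D) :|: P.
have hm' : hmatch M'.
  apply/andP; split.
    apply/forall_inP => e; rewrite !inE => /orP[/andP[_ he]|he].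
      exact: hM_edge. exact: hP.
  apply/trivIsetP => A B; rewrite !inE => hA hB neAB.
  case/orP: hA => [/andP[nAD AM]|AP]; case/orP: hB => [/andP[nBD BM]|BP].
  - exact: (trivIsetP hM_triv).
  - by rewrite disjoint_sym; apply: hdis.
  - by apply: hdis.
  - exact: (trivIsetP tP).
have I0 : (M :\: D) :&: P = set0.
  apply/setP => B; rewrite !inE; apply/negbTE/negP => /andP[/andP[nBD BM] BP].
  have := hdis B B BP BM nBD; have := hedge_n0 (hP B BP).
  case/set0Pn=> x hx /(disjointFr)/(_ hx); by rewrite hx.
have := maxM hm'.
rewrite /M' cardsU I0 cards0 subn0 cardsD (setIidPr sDM).
have : #|D| <= #|M| by apply: subset_leq_card.
move=> h1 h2; move: ltDP h1 h2; lia.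
Qed.

Definition p (v : 'I_n) : 'I_n := odflt v [pick y | [set v; y] \in M].
Local Notation V := (cover M).

Lemma inV v C : C \in M -> v \in C -> v \in V.
Proof. by move=> CM vC; apply/bigcupP; exists C. Qed.

Lemma same_block C1 C2 v : C1 \in M -> C2 \in M -> v \in C1 -> v \in C2 -> C1 = C2.
Proof.
move=> h1 h2 v1 v2; apply/eqP; apply/negPn/negP => ne.
by have := disjointFr (trivIsetP hM_triv C1 C2 h1 h2 ne) v1; rewrite v2.
Qed.

Lemma pP v : v \in V -> [set v; p v] \in M.
Proof.
case/bigcupP => C CM vC.
have : exists y, [set v; y] \in M.
  case/andP: (hM_edge CM) => /cards2P [a [b [ab eC]]] _.
  move: vC; rewrite eC !inE => /orP[] /eqP ->.
    by exists b; rewrite -eC.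
  by exists a; rewrite setUC -eC.
case=> y hy; rewrite /p; case: pickP => [z hz //|h].
by move: (h y); rewrite hy.
Qed.

Lemma pneq v : v \in V -> v != p v.
Proof.
move/pP/hM_edge => /andP[] /eqP; rewrite cards2; by case: (v != p v).
Qed.

Lemma p_uniq v y : [set v; y] \in M -> p v = y.
Proof.
move=> h.
have vV : v \in V by apply: (inV h); rewrite !inE eqxx.
have e := same_block h (pP vV) (setU11 _ _) (setU11 _ _).
have yv : v != y.
  move/hM_edge: h => /andP[] /eqP; rewrite cards2; by case: (v != y).
have : y \in [set v; p v] by rewrite -e !inE eqxx orbT.
rewrite !inE eq_sym (negbTE yv) /= => /eqP ->; by [].
Qed.

Lemma pK : involutive p.
Proof.
move=> v; case: (boolP (v \in V)) => vV.
  by apply: p_uniq; rewrite setUC; apply: pP.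
have -> : p v = v.
  rewrite /p; case: pickP => [y hy|//].
  by case/negP: vV; apply: (inV hy); rewrite !inE eqxx.
rewrite /p; case: pickP => [y hy|//].
by case/negP: vV; apply: (inV hy); rewrite !inE eqxx.
Qed.

Lemma pV v : v \in V -> p v \in V.
Proof. move=> vV; apply: (inV (pP vV)); by rewrite !inE eqxx orbT. Qed.

Lemma blockE v C : C \in M -> v \in C -> C = [set v; p v].
Proof.
move=> CM vC; apply: (same_block CM (pP (inV CM vC)) vC); by rewrite !inE eqxx.
Qed.

Lemma notin_block v C : v \in V -> C \in M -> C != [set v; p v] -> (v \notin C) && (p v \notin C).
Proof.
move=> vV CM ne; apply/andP; split; apply/negP => h.
  by move: ne; rewrite -(blockE CM h) eqxx.
move: ne; rewrite (blockE CM h) pK setUC; by rewrite eqxx.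
Qed.

Lemma U_notin a C : a \in ~: V -> C \in M -> a \notin C.
Proof. rewrite inE => aU CM; apply/negP => aC; by rewrite (inV CM aC) in aU. Qed.

Lemma UV_neq a v : a \in ~: V -> v \in V -> a != v.
Proof. by rewrite inE => aU vV; apply/eqP => e; rewrite e vV in aU. Qed.

Lemma noC1 a b : a \in ~: V -> b \in ~: V -> hh a b -> False.
Proof.
move=> aU bU hab.
apply: (@aug set0 [set [set a; b]]).
- exact: sub0set.
- by move=> B; rewrite inE => /eqP ->; apply: hh_hedge.
- exact: triv1.
- move=> B C; rewrite inE => /eqP -> CM _; by rewrite disj2 !U_notin.
- by rewrite cards0 cards1.
Qed.

Lemma noC2 x a b : x \in V -> a \in ~: V -> b \in ~: V -> a != b ->
  hh x a -> hh (p x) b -> False.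
Proof.
move=> xV aU bU ab h1 h2.
have pxV := pV xV.
have xpx := pneq xV.
have dP : [disjoint [set x; a] & [set p x; b]].
  rewrite disj2 !inE !negb_or xpx (eq_sym x b) (UV_neq bU xV) (UV_neq aU pxV) ab; by [].
apply: (@aug [set [set x; p x]] [set [set x; a]; [set p x; b]]).
- by rewrite sub1set; apply: pP.
- by move=> B; rewrite !inE => /orP[] /eqP ->; apply: hh_hedge.
- exact: triv2.
- move=> B C; rewrite !inE => BP CM nCD.
  have := notin_block xV CM nCD; case/andP=> n1 n2.
  by case/orP: BP => /eqP ->; rewrite disj2 ?n1 ?n2 !U_notin.
- by rewrite cards1 card2' //; apply: hedge_n0; apply: hh_hedge.
Qed.

Lemma noC3 x x' a b : x \in V -> x' \in V -> [set x; p x] != [set x'; p x'] ->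
  a \in ~: V -> b \in ~: V -> a != b ->
  hh x a -> hh x' b -> hh (p x) (p x') -> False.
Proof.
move=> xV x'V neB aU bU ab h1 h2 h3.
have pxV := pV xV. have px'V := pV x'V.
have xpx := pneq xV. have xpx' := pneq x'V.
have := notin_block x'V (pP xV) neB; rewrite !inE negb_or negb_or.
case/andP=> /andP[d1 d2] /andP[d3 d4].
have dP12 : [disjoint [set x; a] & [set p x; p x']].
  by rewrite disj2 !inE !negb_or xpx (eq_sym x (p x')) d3 (UV_neq aU pxV) (UV_neq aU px'V).
have dP13 : [disjoint [set x; a] & [set x'; b]].
  by rewrite disj2 !inE !negb_or (eq_sym x x') d1 (eq_sym x b) (UV_neq bU xV) (UV_neq aU x'V) ab.
have dP23 : [disjoint [set p x; p x'] & [set x'; b]].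
  by rewrite disj2 !inE !negb_or (eq_sym (p x) x') d2 (eq_sym (p x) b) (UV_neq bU pxV)
    (eq_sym (p x') x') xpx' (eq_sym _ b) (UV_neq bU px'V).
apply: (@aug [set [set x; p x]; [set x'; p x']]
             [set [set x; a]; [set p x; p x']; [set x'; b]]).
- by rewrite subUset !sub1set !pP.
- by move=> B; rewrite !inE -!orbA => /orP[|/orP[]] /eqP ->; apply: hh_hedge.
- exact: triv3.
- move=> B C; rewrite !inE negb_or -!orbA => BP CM /andP[nC1 nC2].
  have := notin_block xV CM nC1; case/andP=> n1 n2.
  have := notin_block x'V CM nC2; case/andP=> n3 n4.
  by case/orP: BP => [|/orP[]] /eqP ->; rewrite disj2 ?n1 ?n2 ?n3 ?n4 ?U_notin.
- rewrite card3 //; try (by apply: hedge_n0; apply: hh_hedge).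
  by rewrite cards2; case: (_ != _).
Qed.

Definition nb x := [set a in ~: V | hh x a].
Definition X := [set x | 1 < #|nb x|].
Definition Y := p @^-1: X.
Definition Z := V :\: (X :|: Y).

Lemma gg_hh x y : x != y -> gg x y = ~~ hh x y.
Proof. by rewrite /gg /hh => ->. Qed.

Lemma XV x : x \in X -> x \in V.
Proof.
rewrite inE => /card_gt1P [a1 [a2 [h1 _ _]]].
apply/negPn/negP => xU.
move: h1; rewrite inE => /andP[a1U hx].
apply: (noC1 (a:=x) _ a1U hx); by rewrite inE.
Qed.

Lemma nb2 x c : x \in X -> exists a, [/\ a \in ~: V, hh x a & a != c].
Proof.
rewrite inE => /card_gt1P [a1 [a2 [h1 h2 ne]]].
move: h1 h2; rewrite !inE => /andP[a1U h1] /andP[a2U h2].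
case: (eqVneq a1 c) => [e|ne1].
  exists a2; split; rewrite ?inE //; by rewrite -e eq_sym.
by exists a1; split; rewrite ?inE.
Qed.

Lemma X2 x b : x \in X -> b \in ~: V -> ~~ hh (p x) b.
Proof.
move=> xX bU; apply/negP => hb.
have [a [aU ha ab]] := nb2 b xX.
exact: (noC2 (XV xX) aU bU ab ha hb).
Qed.

Lemma XpX x : x \in X -> p x \notin X.
Proof.
move=> xX; apply/negP => pxX.
have [b [bU hb _]] := nb2 x pxX.
by move: (X2 xX bU); rewrite hb.
Qed.

Lemma XY0 y : y \in X -> y \in Y -> False.
Proof.
move=> yX; rewrite inE => pyX.
by move: (XpX pyX); rewrite pK yX.
Qed.

Lemma YV y : y \in Y -> y \in V.
Proof. rewrite inE => /XV /pV; by rewrite pK. Qed.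

Lemma YU y b : y \in Y -> b \in ~: V -> gg y b.
Proof.
move=> yY bU.
have yb : y != b by rewrite eq_sym; apply: UV_neq => //; exact: YV.
rewrite gg_hh //.
move: yY; rewrite inE => pyX.
by have := X2 pyX bU; rewrite pK.
Qed.

Lemma YY y y' : y \in Y -> y' \in Y -> y != y' -> gg y y'.
Proof.
move=> yY y'Y ne; rewrite gg_hh //; apply/negP => hyy.
have xX : p y \in X by rewrite inE in yY.
have x'X : p y' \in X by rewrite inE in y'Y.
have neB : [set p y; p (p y)] != [set p y'; p (p y')].
  rewrite !pK; apply/negP => /eqP e.
  have : y' \in [set p y; y] by rewrite e !inE eqxx orbT.
  rewrite !inE (eq_sym y' y) (negbTE ne) orbF => /eqP ey'.
  by apply: (XY0 (y:=y')) => //; rewrite ey'.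
have [a [aU ha _]] := nb2 y xX.
have [b [bU hb ab]] := nb2 a x'X.
apply: (noC3 (XV xX) (XV x'X) neB aU bU _ ha hb); first by rewrite eq_sym.
by rewrite !pK.
Qed.

Lemma ZX z : z \in Z -> #|nb z| <= 1.
Proof. by rewrite !inE negb_or => /andP[/andP[/negP nX _] _]; rewrite leqNgt; apply/negP. Qed.

Lemma ZV z : z \in Z -> z \in V.
Proof. by rewrite !inE => /andP[]. Qed.

Definition S := \sum_(x : 'I_n) \sum_(y : 'I_n) (gg x y : nat).

Lemma dUY : [disjoint ~: V & Y].
Proof. apply: disjP' => x; rewrite inE => /negP h /YV; exact: h. Qed.
Lemma dUZ : [disjoint ~: V & Z].
Proof. apply: disjP' => x; rewrite inE => /negP h /ZV; exact: h. Qed.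
Lemma dYZ : [disjoint Y & Z].
Proof. apply: disjP' => x hY; rewrite /Z in_setD => /andP[/negP h _]; apply: h; by rewrite in_setU hY orbT. Qed.

Lemma RUU x : x \in ~: V -> \sum_(y in ~: V) (gg x y : nat) = #|~: V| - 1.
Proof.
move=> xU; rewrite sum_card (cardsD1 x (~: V)) xU add1n subSS subn0.
apply: eq_card => y; rewrite !inE.
case: (eqVneq y x) => [->|ne] /=; first by rewrite /gg eqxx andbF.
case: (boolP (y \in V)) => //= yV.
rewrite gg_hh 1?eq_sym //; apply/negP => h.
by apply: (noC1 xU _ h); rewrite inE.
Qed.

Lemma RUY x : x \in ~: V -> \sum_(y in Y) (gg x y : nat) = #|Y|.
Proof.
move=> xU; rewrite sum_card; apply: eq_card => y; rewrite inE.
case: (boolP (y \in Y)) => //= yY; rewrite gg_sym; exact: YU.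
Qed.

Lemma RYU x : x \in Y -> \sum_(y in ~: V) (gg x y : nat) = #|~: V|.
Proof.
move=> xY; rewrite sum_card; apply: eq_card => y; rewrite inE.
case: (boolP (y \in ~: V)) => //= yU; exact: YU.
Qed.

Lemma RYY x : x \in Y -> \sum_(y in Y) (gg x y : nat) = #|Y| - 1.
Proof.
move=> xY; rewrite sum_card (cardsD1 x Y) xY add1n subSS subn0.
apply: eq_card => y; rewrite in_set in_setD1.
case: (eqVneq y x) => [->|ne] /=; first by rewrite /gg eqxx andbF.
case: (boolP (y \in Y)) => //= yY; apply: YY => //; by rewrite eq_sym.
Qed.

Lemma RZU z : z \in Z -> #|~: V| - 1 <= \sum_(y in ~: V) (gg z y : nat).
Proof.
move=> zZ; rewrite sum_card.
have : #|~: V| <= #|[set y in ~: V | gg z y]| + #|nb z|.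
  apply: leq_trans (leq_card_setU _ _); apply: subset_leq_card.
  apply/subsetP => y yU; rewrite !inE.
  have zy : z != y by rewrite eq_sym; apply: UV_neq => //; exact: ZV.
  rewrite inE in yU; rewrite yU /= gg_hh //; by case: (hh z y).
have := ZX zZ; lia.
Qed.

Lemma S_ge : #|~: V| * (#|~: V| - 1) + 2 * (#|~: V| * #|Y|) + #|Y| * (#|Y| - 1)
   + 2 * (#|Z| * (#|~: V| - 1)) <= S.
Proof.
pose RU x := \sum_(y in ~: V) (gg x y : nat).
pose RY x := \sum_(y in Y) (gg x y : nat).
pose RZ x := \sum_(y in Z) (gg x y : nat).
have h1 : \sum_x (RU x + RY x + RZ x) <= S.
  by rewrite /S; apply: leq_sum => x _; exact: sum3_le dUY dUZ dYZ.
have h2 := sum3_le (fun x => RU x + RY x + RZ x) dUY dUZ dYZ.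
rewrite !big_split /= in h1 h2.
have eUU : \sum_(x in ~: V) RU x = #|~: V| * (#|~: V| - 1).
  by rewrite (eq_bigr (fun _ => #|~: V| - 1)) ?sum_nat_const // => x xU; apply: RUU.
have eUY : \sum_(x in ~: V) RY x = #|~: V| * #|Y|.
  by rewrite (eq_bigr (fun _ => #|Y|)) ?sum_nat_const // => x xU; apply: RUY.
have eYU : \sum_(x in Y) RU x = #|Y| * #|~: V|.
  by rewrite (eq_bigr (fun _ => #|~: V|)) ?sum_nat_const // => x xU; apply: RYU.
have eYY : \sum_(x in Y) RY x = #|Y| * (#|Y| - 1).
  by rewrite (eq_bigr (fun _ => #|Y| - 1)) ?sum_nat_const // => x xU; apply: RYY.
have eZU : #|Z| * (#|~: V| - 1) <= \sum_(x in Z) RU x.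
  rewrite -sum_nat_const; apply: leq_sum => x xZ; exact: RZU.
have eUZ : \sum_(x in ~: V) RZ x = \sum_(x in Z) RU x.
  rewrite /RZ /RU exchange_big /=; apply: eq_bigr => x _; apply: eq_bigr => y _.
  by rewrite gg_sym.
move: h1 h2; rewrite eUU eUY eYU eYY eUZ.
move: eZU; set a := \sum_(x in Z) RU x; set b := \sum_(x in Y) RZ x; set c := \sum_(x in Z) RY x;
  set d := \sum_(x in Z) RZ x.
rewrite (mulnC #|Y| #|~: V|).
lia.
Qed.

Lemma cardV : #|V| = 2 * #|M|.
Proof.
rewrite -(eqP hM_triv) (eq_bigr (fun _ => 2)); first by rewrite sum_nat_const mulnC.
by move=> B /hM_edge /andP[/eqP].
Qed.

Lemma cardU : #|~: V| = n - 2 * #|M|.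
Proof. have := cardsC V; rewrite card_ord cardV; lia. Qed.

Lemma cardYX : #|Y| = #|X|.
Proof. apply: card_preimset; exact: (can_inj pK). Qed.

Lemma cardZ : #|Z| + 2 * #|Y| = #|V|.
Proof.
have dXY : [disjoint X & Y] by apply: disjP' => x; exact: XY0.
have sXY : X :|: Y \subset V.
  by apply/subsetP => x; rewrite in_setU => /orP[/XV|/YV].
have cXY : #|X :|: Y| = 2 * #|Y|.
  rewrite cardsU; have -> : X :&: Y = set0 by apply/eqP; rewrite setI_eq0.
  by rewrite cards0 subn0 cardYX addnn -mul2n.
rewrite /Z cardsD (setIidPr sXY) cXY subnK //.
by rewrite -cXY; apply: subset_leq_card.
Qed.
End Max.
End Match.

Lemma other (n : nat) (x : 'I_n) (e : {set 'I_n}) : #|e| == 2 -> x \in e ->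
  exists y, y != x /\ e = [set x; y].
Proof.
case/cards2P => [a [b [ab ->]]]; rewrite !inE => /orP[] /eqP ->.
  by exists b; rewrite eq_sym.
by exists a; rewrite setUC.
Qed.

Lemma sum_pairs (n : nat) (w : {set 'I_n} -> nat) :
  \sum_(x : 'I_n) \sum_(y : 'I_n) ((x != y) * w [set x; y]) = 2 * \sum_(e in Kn_edges n) w e.
Proof.
have row x : \sum_(y : 'I_n) ((x != y) * w [set x; y]) =
    \sum_(e : {set 'I_n}) (((e \in Kn_edges n) && (x \in e)) * w e).
  transitivity (\sum_(y | y != x) w [set x; y]).
    rewrite [RHS]big_mkcond; apply: eq_bigr => y _.
    rewrite (eq_sym x y); case: (eqVneq y x) => [->|ne] /=; by rewrite ?mul1n ?mul0n.
  transitivity (\sum_(e | (e \in Kn_edges n) && (x \in e)) w e); last first.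
    rewrite [LHS]big_mkcond; apply: eq_bigr => e _.
    by case: (_ && _); rewrite ?mul1n ?mul0n.
  rewrite (partition_big (fun y => [set x; y]) (fun e => (e \in Kn_edges n) && (x \in e))) /=.
    apply: eq_bigr => e /andP[]; rewrite inE => he xe.
    have [y0 [ne ->]] := other he xe.
    rewrite (big_pred1 y0) //.
    move=> y /=; apply/idP/idP.
      case/andP=> yx /eqP e1.
      have : y \in [set x; y0] by rewrite -e1 !inE eqxx orbT.
      by rewrite !inE (negbTE yx).
    by move/eqP => ->; rewrite ne eqxx.
  move=> y yx; rewrite !inE eqxx cards2 (eq_sym x y) yx; by [].
rewrite (eq_bigr _ (fun x _ => row x)) exchange_big /=.
rewrite big_distrr /= [RHS]big_mkcond /=.
apply: eq_bigr => e _.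
case: (boolP (e \in Kn_edges n)) => he /=; last by rewrite big1.
have ce : #|e| = 2 by move: he; rewrite inE => /eqP.
rewrite -big_distrl /=.
have -> : \sum_(x : 'I_n) (x \in e : nat) = #|e|.
  by rewrite -sum1_card [RHS]big_mkcond /=; apply: eq_bigr => x _; case: (x \in e).
by rewrite ce.
Qed.

Lemma S_le (n : nat) (w : {set 'I_n} -> nat) :
  S w <= 2 * weight w (Kn_edges n).
Proof.
rewrite /weight -sum_pairs /S; apply: leq_sum => x _; apply: leq_sum => y _.
rewrite /gg; case: (x != y) => //=; case: (eqVneq (w [set x; y]) 0%N) => //= h.
by rewrite mul1n lt0n h.
Qed.

Lemma pairing (T : finType) (S0 : {set T}) : exists P : {set {set T}},
  [/\ (forall B, B \in P -> B \subset S0 /\ #|B| = 2), trivIset P & #|P| = #|S0|./2].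
Proof.
have gen : forall k (S : {set T}), #|S| <= k -> exists P : {set {set T}},
  [/\ (forall B, B \in P -> B \subset S /\ #|B| = 2), trivIset P & #|P| = #|S|./2].
  elim=> [|k IH] S hS.
    exists set0; split; first by move=> B; rewrite inE.
      by apply/trivIsetP => A B; rewrite inE.
    by move: hS; rewrite leqn0 => /eqP ->; rewrite cards0.
  case: (leqP #|S| 1) => h1.
    exists set0; split; first by move=> B; rewrite inE.
      by apply/trivIsetP => A B; rewrite inE.
    rewrite cards0; move: h1; case: #|S| => [|[|m]] //.
  case/card_gt1P: h1 => x [y [xS yS xy]].
  set S' := S :\ x :\ y.
  have cS : #|S| = #|S'|.+2.
    rewrite (cardsD1 x S) xS (cardsD1 y (S :\ x)) !inE eq_sym xy yS.
    by rewrite add1n add1n.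
  have hS' : #|S'| <= k by move: hS; rewrite cS; lia.
  have [P' [hP' tP' cP']] := IH S' hS'.
  have dis : {in P', forall B : {set T}, [disjoint [set x; y] & B]}.
    move=> B BP; have [sB _] := hP' B BP; rewrite disj2.
    apply/andP; split; apply/negP => h; have := subsetP sB _ h; by rewrite !inE ?eqxx ?andbF.
  have n0 : set0 \notin P'.
    by apply/negP => h; have [_ c] := hP' _ h; rewrite cards0 in c.
  have [tP nIn] := trivIsetU1 dis tP' n0.
  exists ([set x; y] |: P'); split => //.
    move=> B; rewrite in_setU1 => /orP[/eqP ->|BP].
      split; last by rewrite cards2 xy.
      by apply/subsetP => z; rewrite !inE => /orP[] /eqP ->.
    have [sB cB] := hP' B BP; split => //.
    apply: subset_trans sB _; apply/subsetP => z; rewrite !inE; by case/and3P.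
  by rewrite cardsU1 nIn cP' cS.
exact: gen.
Qed.

Lemma half_add2 k v : (k + 2 * v)./2 = k./2 + v.
Proof. by rewrite mul2n halfD odd_double andbF add0n doubleK. Qed.

Lemma extend (n : nat) (w : {set 'I_n} -> nat) (M : {set {set 'I_n}}) :
  zero_one_instance w -> hmatch w M ->
  exists M', optimal_matching M' /\ weight w M' <= n./2 - #|M|.
Proof.
move=> z1 hM.
have [P [hP tP cP]] := pairing (~: cover M).
have tM := hM_triv hM.
have dMP : forall B C, B \in M -> C \in P -> [disjoint B & C].
  move=> B C BM CP; have [sC _] := hP C CP.
  apply: disjP' => x xB xC.
  have := subsetP sC x xC; rewrite inE => /negP; apply.
  by apply/bigcupP; exists B.
have I0 : M :&: P = set0.
  apply/setP => B; rewrite !inE; apply/negbTE/negP => /andP[BM BP].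
  have := dMP B B BM BP; have [_ cB] := hP B BP.
  have : B != set0 by apply/eqP => e; rewrite e cards0 in cB.
  case/set0Pn=> x hx /(disjointFr)/(_ hx); by rewrite hx.
have cM := cardV hM.
have cU := cardU hM.
have vn : 2 * #|M| <= n by have := max_card (mem (cover M)); rewrite card_ord cM.
have [k ek] : exists k, n = k + 2 * #|M| by exists (n - 2 * #|M|); lia.
have hn := half_add2 k #|M|; rewrite -ek in hn.
have hk : n - 2 * #|M| = k by lia.
exists (M :|: P); split.
  split.
  - apply/subsetP => B; rewrite in_setU inE => /orP[/(hM_edge hM)/andP[]//|/hP[_ ->]//].
  - apply: trivIsetU => //; apply: disjP' => x /bigcupP[B BM xB] /bigcupP[C CP xC].
    by have := disjointFr (dMP B C BM CP) xB; rewrite xC.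
  - rewrite cardsU I0 cards0 subn0 cP cU hk hn; lia.
rewrite /weight (eq_bigl [predU M & P]); last by move=> B; rewrite in_setU.
rewrite bigU; last by rewrite -setI_eq0 I0.
rewrite big1; last by move=> B /(hM_edge hM)/andP[_ /eqP].
rewrite /= add0n.
have : \sum_(B in P) w B <= #|P|.
  rewrite -sum1_card; apply: leq_sum => B BP; apply: z1.
  by rewrite inE; have [_ ->] := hP B BP.
rewrite cP cU hk hn addnK; exact.
Qed.
Lemma arith (u t z v W : nat) : 2 <= u -> z + 2 * t = 2 * v ->
  u * (u - 1) + 2 * (u * t) + t * (t - 1) + 2 * (z * (u - 1)) <= 2 * W ->
  (v + 2 <= u /\ (u + v) * (u + v) <= 2 * W + (u + v)) \/
  (u <= v + 1 /\ 2 * (u * (2 * v + 1)) <= 2 * W + 2 * (2 * v + 1)).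
Proof.
move=> u2 hz hS.
have tv : t <= v by lia.
have [s es] : exists s, v = t + s by exists (v - t); lia.
subst v.
have ez : z = 2 * s by lia.
subst z.
have [b eu] : exists b, u = b + 1 by exists (u - 1); lia.
subst u; rewrite addnK in hS.
have et : t * (t - 1) + t = t * t by case: t {tv hz hS} => //= t; rewrite subn1 /= mulnS addnC.
case: (leqP (t + s + 2) (b + 1)) => hv.
  left; split => //.
  have [c ec] : exists c, b = t + s + c + 1 by exists (b - t - s - 1); lia.
  subst b.
  nia.
right; split; first lia.
case: (leqP t b) => ht.
  have [c ec] : exists c, b = t + c by exists (b - t); lia.
  subst b. nia.
have [c ec] : exists c, t = b + c + 1 by exists (t - b - 1); lia.
subst t. nia.
Qed.

Unset Implicit Arguments.
Local Open Scope ring_scope.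

Lemma RA_low (R : realFieldType) (n m d : R) :
  0 <= d -> d <= 9/25 -> 1 <= n -> n/2 <= m -> m*(m-1) <= d*(n*(n-1)) ->
  m - n/2 <= 2^-1 * d * n - 8^-1 * d * n + 1.
Proof.
move=> d0 d1 n1 hm hmm.
set M := n/2 + 3/8*d*n + 1.
have key : d*(n*(n-1)) <= M*(M-1).
  have h1 : 0 <= (4/9 - d)*(4-d) by apply: mulr_ge0; lra.
  have h2 : 0 <= n*n*((4/9 - d)*(4-d)) by apply: mulr_ge0 => //; nra.
  rewrite /M; nra.
have : m <= M.
  rewrite leNgt; apply/negP => hlt.
  have : M*(M-1) < m*(m-1).
    have dn : 0 <= d*n by apply: mulr_ge0; lra.
    have : 0 < (m - M)*(m + M - 1) by apply: mulr_gt0; rewrite /M in hlt *; lra.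
    nra.
  lra.
rewrite /M. lra.
Qed.

Lemma RA_high (R : realFieldType) (n m d : R) :
  9/25 <= d -> d <= 1 -> 1 <= n -> n/2 <= m -> m*(m-1) <= d*(n*(n-1)) ->
  m - n/2 <= 2^-1 * d * n - 8^-1 * (1 - d)^+2 * n + 1.
Proof.
move=> d0 d1 n1 hm hmm.
move eq_e : (1 - d) => e.
have hd : d = 1 - e by rewrite -eq_e; ring.
subst d.
have e0 : 0 <= e by lra.
have e1 : e <= 16/25 by lra.
move eq_c : (1 - e/2 - e^+2/8) => c.
have c0 : 0 < c by rewrite -eq_c; nra.
have key : (1-e)*(n*(n-1)) <= (n*c+1)*(n*c).
  have h1 : 0 <= n*n*(e^+3/8 + e^+4/64).
    apply: mulr_ge0; first nra.
    apply: addr_ge0; apply: mulr_ge0 => //; try (apply: exprn_ge0 => //); lra.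
  have hc : c^+2 = 1 - e + e^+3/8 + e^+4/64 by rewrite -eq_c; field.
  have : (n*c+1)*(n*c) - (1-e)*(n*(n-1)) = n*n*(e^+3/8 + e^+4/64) + n*(c+(1-e)).
    have -> : (n * c + 1) * (n * c) = n*n*c^+2 + n*c by ring.
    rewrite hc; ring.
  have : 0 <= n*(c+(1-e)) by apply: mulr_ge0; lra.
  lra.
have : m <= n*c+1.
  rewrite leNgt; apply/negP => hlt.
  have : (n*c+1)*(n*c) < m*(m-1).
    have cn : 0 <= n*c by apply: mulr_ge0; lra.
    have : 0 < (m - (n*c+1))*(m + (n*c+1) - 1) by apply: mulr_gt0; lra.
    nra.
  lra.
rewrite -eq_c. lra.
Qed.

Lemma RB_low (R : realFieldType) (n u d : R) :
  0 <= d -> 2 <= u -> 3*u - 2 <= n -> 2*(u-1)*(n-u+1) <= d*(n*(n-1)) ->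
  u/2 <= 2^-1 * d * n - 8^-1 * d * n + 1.
Proof.
move=> d0 u2 hn hD.
have h1 : 0 <= (u-1)*(n-3*u+2) by apply: mulr_ge0; lra.
have n1 : 0 < n - 1 by lra.
have key : 0 <= (3/8*(d*n) + 1 - u/2) * (n-1).
  have -> : (3/8*(d*n) + 1 - u/2) * (n-1) = 3/8*(d*(n*(n-1))) + (1 - u/2)*(n-1) by ring.
  nra.
have : 0 <= 3/8*(d*n) + 1 - u/2.
  rewrite -(pmulr_lge0 _ n1) //. 
lra.
Qed.

Lemma RB_high (R : realFieldType) (n u d : R) :
  9/25 <= d -> d <= 1 -> 2 <= u -> 3*u - 2 <= n -> 2*(u-1)*(n-u+1) <= d*(n*(n-1)) ->
  u/2 <= 2^-1 * d * n - 8^-1 * (1 - d)^+2 * n + 1.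
Proof.
move=> d0 d1 u2 hn hD.
have n4 : 4 <= n by lra.
have hsq : (1-d)^+2 * n <= 16/25*(1-d)*n.
  have : 0 <= (16/25 - (1-d)) * ((1-d)*n) by apply: mulr_ge0; nra.
  move=> h; rewrite expr2; nra.
suff : u/2 <= 29/50*(d*n) - 2/25*n + 1 by nra.
have Dn : 9/25*n <= d*n by nra.
case: (lerP u (161/625*n + 2)) => hu; first lra.
have n1 : 0 < n - 1 by lra.
have hint : 0 <= (u - (161/625*n+2))*((n+2)/3 - u) by apply: mulr_ge0; lra.
have key : 0 <= (29/50*(d*n) - 2/25*n + 1 - u/2) * (n-1).
  have -> : (29/50*(d*n) - 2/25*n + 1 - u/2) * (n-1) = 29/50*(d*(n*(n-1))) - (2/25*n - 1 + u/2)*(n-1) by ring.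
  nra.
have : 0 <= 29/50*(d*n) - 2/25*n + 1 - u/2 by rewrite -(pmulr_lge0 _ n1).
lra.
Qed.

Lemma bin2x n : (2 * 'C(n, 2) = n * n.-1)%N.
Proof.
elim: n => [//|n IH]; rewrite binS bin1 mulnDr IH.
case: n {IH} => [//|n] /=; lia.
Qed.

Theorem proposition5p2 (R : realFieldType) (n : nat) (w : {set 'I_n} -> nat) (d : R) :
  (1 <= n)%N ->
  zero_one_instance w ->
  (weight w (Kn_edges n))%:R = d * ('C(n, 2))%:R ->
  0 <= d <= 1 ->
  (n%:R)^-1 <= d -> d <= 1 - 4 * (n%:R)^-1 ->
  (d <= 9 / 25 ->
     exists M, optimal_matching M /\ (weight w M)%:R <= f_low n d) /\
  (9 / 25 <= d ->
     exists M, optimal_matching M /\ (weight w M)%:R <= f_high n d).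
Proof.
move=> n1 z1 hW /andP[d0 d1] _ _.
have h0 : hmatch w set0.
  apply/andP; split; first by apply/forall_inP => e; rewrite inE.
  by apply/trivIsetP => A B; rewrite inE.
case: (arg_maxnP (fun M : {set {set 'I_n}} => #|M|) h0) => M hM maxM.
have [M' [opt wt]] := extend z1 hM.
have cV := cardV hM.
have cU := cardU hM.
have cZ := cardZ hM maxM.
have Sge := S_ge hM maxM.
have Sle := S_le w.
have vn : (2 * #|M| <= n)%N by have := max_card (mem (cover M)); rewrite card_ord cV.
set v := #|M| in wt cV cU cZ Sge vn.
set W := weight w (Kn_edges n) in hW Sle.
set u := (n - 2 * v)%N in cU.
rewrite cU in Sge.
have nuv : n = (u + 2 * v)%N by rewrite /u; lia.
have hk : ((n./2 - v) * 2 <= u)%N.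
  have := odd_double_half n; rewrite -mul2n; rewrite /u; lia.
have wk : ((weight w M')%:R : R) <= u%:R / 2.
  have : ((weight w M') * 2 <= u)%N by apply: leq_trans hk; rewrite leq_mul2r wt orbT.
  rewrite -(ler_nat R) natrM => h; lra.
have eN : (n%:R : R) = u%:R + 2 * v%:R by rewrite nuv natrD natrM.
have e2W : 2 * (W%:R : R) = d * (n%:R * (n%:R - 1)).
  rewrite hW mulrCA -(natrM R 2) bin2x natrM -subn1 natrB //.
have U0 : (0 : R) <= u%:R by rewrite ler0n.
have V0 : (0 : R) <= v%:R by rewrite ler0n.
have N1 : (1 : R) <= n%:R by rewrite ler1n.
case: (leqP u 1) => u1.
  have wk0 : ((weight w M')%:R : R) <= 0.
    have : (weight w M' * 2 <= 1)%N by apply: leq_trans u1; apply: leq_trans hk; rewrite leq_mul2r wt orbT.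
    by move=> h; have -> : weight w M' = 0%N by lia.
  have dn : 0 <= d * n%:R by apply: mulr_ge0; lra.
  split => hd; exists M'; split => //; apply: le_trans wk0 _; rewrite /f_low /f_high.
    lra.
  have e0 : (1 - d)^+2 <= 16/25.
    have : 0 <= (1-d) * (16/25 - (1-d)) by apply: mulr_ge0; lra.
    rewrite expr2; nra.
  have : (1 - d)^+2 * n%:R <= 16/25 * n%:R by apply: ler_wpM2r; lra.
  nra.
have := @arith u #|Y w M| #|Z w M| v W u1.
rewrite cZ cV => /(_ erefl (leq_trans Sge Sle)).
case=> [[hv hA]|[hv hB]].
  have hAR : (u%:R + v%:R) * (u%:R + v%:R) <= 2 * W%:R + (u%:R + v%:R) :> R.
    move: hA; rewrite -(ler_nat R) !natrM !natrD => h; lra.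
  have hm : (u%:R + v%:R) * ((u%:R + v%:R) - 1) <= d * (n%:R * (n%:R - 1)) :> R.
    rewrite -e2W; nra.
  have hNm : n%:R / 2 <= u%:R + v%:R :> R by rewrite eN; lra.
  split => hd; exists M'; split => //; apply: le_trans wk _.
    have := @RA_low _ _ _ _ d0 hd N1 hNm hm; rewrite /f_low; lra.
  have := @RA_high _ _ _ _ hd d1 N1 hNm hm; rewrite /f_high; lra.
have hBR : 2 * (u%:R * (2 * v%:R + 1)) <= 2 * W%:R + 2 * (2 * v%:R + 1) :> R.
  by move: hB; rewrite -(ler_nat R) !natrM !natrD => h; lra.
have u2 : (2 : R) <= u%:R by rewrite (ler_nat R 2).
have hn3 : 3 * u%:R - 2 <= n%:R :> R.
  have : (u%:R : R) <= v%:R + 1 by rewrite -(natrD R v 1) ler_nat.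
  lra.
have hm : 2 * (u%:R - 1) * (n%:R - u%:R + 1) <= d * (n%:R * (n%:R - 1)) :> R.
  rewrite -e2W eN; nra.
split => hd; exists M'; split => //; apply: le_trans wk _.
  by have := @RB_low _ _ _ _ d0 u2 hn3 hm; rewrite /f_low.
by have := @RB_high _ _ _ _ hd d1 u2 hn3 hm; rewrite /f_high.
Qed.
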